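(* Let $X\in\mathfrak U$ and let $Y$ be a nonempty subspace of $X$. Then $Y\in\mathfrak U$.
   Context: For a metric space $(X,d)$, $\operatorname{Sp}(X)=\{d(x,y): x,y\in X,\ x\neq y\}$. $\mathfrak U$ denotes the class of finite ultrametric spaces $X$ with $|\operatorname{Sp}(X)|=|X|-1$. A subspace carries the restricted metric. *)

(* Defs.v *)
From HB Require Import structures.
From mathcomp Require Import all_boot all_order all_algebra.
Set Implicit Arguments. Unset Strict Implicit. Unset Printing Implicit Defensive.
Import Order.TTheory GRing.Theory Num.Theory.
Local Open Scope ring_scope.

Definition is_metric (R : realFieldType) (T : finType) (d : T -> T -> R) : Prop :=
  [/\ forall x y, 0 <= d x y,
      forall x y, d x y = 0 <-> x = y &
      forall x y, d x y = d y x] /\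
  (forall x y z, d x z <= d x y + d y z).

Definition is_ultrametric (R : realFieldType) (T : finType) (d : T -> T -> R) : Prop :=
  is_metric d /\ (forall x y z, d x z <= Num.max (d x y) (d y z)).

Definition Sp (R : realFieldType) (T : finType) (d : T -> T -> R) : seq R :=
  undup [seq d p.1 p.2 | p <- enum [pred p : T * T | p.1 != p.2]].

(* The class U: finite ultrametric spaces with |Sp(X)| = |X| - 1
   (computed in int, so the empty space is not in U). *)
Definition in_U (R : realFieldType) (T : finType) (d : T -> T -> R) : Prop :=
  is_ultrametric d /\ (size (Sp d))%:Z = (#|T|%:Z - 1)%R.

Definition restr (R : realFieldType) (T : finType) (d : T -> T -> R) (A : {set T})
  : {x : T | x \in A} -> {x : T | x \in A} -> R :=
  fun x y => d (val x) (val y).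
Arguments restr {R T} d A _ _.

(* Main.v *)
Require Import Defs.
From mathcomp Require Import all_boot all_order all_algebra.
From mathcomp Require Import zify.
Import Order.TTheory GRing.Theory Num.Theory.
Set Implicit Arguments. Unset Strict Implicit. Unset Printing Implicit Defensive.

Definition SS (R : realFieldType) (T : finType) (d : T -> T -> R) (A : {set T}) : seq R :=
  [seq d p.1 p.2 | p <- enum [pred p : T * T | (p.1 \in A) && (p.2 \in A) && (p.1 != p.2)]].

Lemma memSS (R : realFieldType) (T : finType) (d : T -> T -> R) (A : {set T}) v :
  v \in SS d A <-> exists a b, [/\ a \in A, b \in A, a != b & v = d a b].
Proof.
split.
  by move/mapP=> [[a b]]; rewrite mem_enum /= => /andP[/andP[Ha Hb] Hab] ->; exists a, b.
move=> [a [b [Ha Hb Hab ->]]]; apply/mapP; exists (a, b) => //.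
by rewrite mem_enum inE /= Ha Hb Hab.
Qed.

Lemma seq_min (R : realFieldType) (T : eqType) (f : T -> R) (s : seq T) :
  s != [::] -> exists2 y, y \in s & forall z, z \in s -> (f y <= f z)%R.
Proof.
elim: s => // a s IH _.
case: s IH => [|b s] IH.
  by exists a; rewrite ?inE // => z; rewrite inE => /eqP ->.
have [y ys Hy] := IH isT.
have [le|lt] := leP (f a) (f y).
  exists a; first by rewrite inE eqxx.
  move=> z; rewrite in_cons => /orP[/eqP -> //|/Hy]; exact: le_trans.
exists y; first by rewrite in_cons ys orbT.
move=> z; rewrite in_cons => /orP[/eqP -> |/Hy //]; exact: ltW.
Qed.

Lemma step (R : realFieldType) (T : finType) (d : T -> T -> R) (B : {set T}) x :
  is_ultrametric d -> B != set0 -> x \notin B ->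
  (size (undup (SS d (x |: B))) <= (size (undup (SS d B))).+1)%N.
Proof.
move=> [[[d0 dE dC] _] dU] B0 xB.
have: enum B != [::].
  apply/negP=> /eqP E; move/set0Pn: B0 => [z zB].
  by rewrite -mem_enum E in zB.
move=> /(seq_min (d x)) [y0]; rewrite mem_enum => y0B Hy0.
pose r := d x y0.
have -> : (size (undup (SS d B))).+1 = size (r :: undup (SS d B)) by [].
apply: uniq_leq_size; first exact: undup_uniq.
move=> v; rewrite mem_undup in_cons mem_undup => /memSS [a [b [Ha Hb Hab ->]]].
have key : forall c, c \in B -> d x c = r \/ d x c \in SS d B.
  move=> c cB; have : (r <= d x c)%R by apply: Hy0; rewrite mem_enum.
  rewrite le_eqVlt => /orP[/eqP <-|lt]; [by left|right].
  have c0 : c != y0 by apply/eqP=> E; rewrite E ltxx in lt.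
  have e : d x c = d y0 c.
    apply/eqP; rewrite eq_le; apply/andP; split.
      have := dU x y0 c; rewrite le_max => /orP[h|//].
      by have := lt_le_trans lt h; rewrite ltxx.
    have := dU y0 x c; rewrite le_max (dC y0 x) -/r => /orP[h|//].
    exact: le_trans h (ltW lt).
  by rewrite e; apply/memSS; exists y0, c; split => //; rewrite eq_sym.
move: Ha Hb; rewrite !in_setU1 => /orP[/eqP Ea|Ha] /orP[/eqP Eb|Hb].
- by rewrite Ea Eb eqxx in Hab.
- by rewrite Ea; case: (key b Hb) => [->|->]; rewrite ?eqxx ?orbT.
- by rewrite Eb dC; case: (key a Ha) => [->|->]; rewrite ?eqxx ?orbT.
- by apply/orP; right; apply/memSS; exists a, b.
Qed.

Lemma grow (R : realFieldType) (T : finType) (d : T -> T -> R) (A : {set T}) :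
  is_ultrametric d -> A != set0 -> forall n (B : {set T}), #|B :\: A| = n -> A \subset B ->
  (size (undup (SS d B)) + #|A| <= size (undup (SS d A)) + #|B|)%N.
Proof.
move=> dU A0; elim=> [|n IH] B.
  move=> /eqP; rewrite cards_eq0 setD_eq0 => BA AB.
  by have -> : B = A by apply/eqP; rewrite eqEsubset BA AB.
move=> Hn AB.
have : B :\: A != set0 by rewrite -card_gt0 Hn.
move=> /set0Pn [x]; rewrite in_setD => /andP[xA xB].
pose B' := B :\ x.
have AB' : A \subset B'.
  apply/subsetP=> z zA; rewrite in_setD1 (subsetP AB) // andbT.
  by apply/eqP=> E; rewrite -E zA in xA.
have Hn' : #|B' :\: A| = n.
  have := cardsD1 x (B :\: A); rewrite in_setD xA xB Hn /= add1n => -[->].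
  by apply: eq_card => z; rewrite /B' !inE; case: (z == x); case: (z \in A).
have := IH B' Hn' AB'.
have B'0 : B' != set0.
  apply/negP=> /eqP E; move: AB'; rewrite E subset0 => /eqP E'; by rewrite E' eqxx in A0.
have xB' : x \notin B' by rewrite in_setD1 eqxx.
have := step dU B'0 xB'.
have EB : x |: B' = B by rewrite setD1K.
rewrite EB.
have cB : #|B| = #|B'|.+1 by rewrite -EB cardsU1 xB'.
rewrite cB; lia.
Qed.

Lemma single (R : realFieldType) (T : finType) (d : T -> T -> R) a :
  SS d [set a] = [::].
Proof.
apply/eqP; rewrite -size_eq0 size_map -cardE; apply/eqP; apply: eq_card0.
by move=> [p q]; rewrite /= !inE; case: (p =P a) => // ->; case: (q =P a) => // ->; rewrite eqxx.
Qed.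

Lemma upper (R : realFieldType) (T : finType) (d : T -> T -> R) (A : {set T}) :
  is_ultrametric d -> A != set0 -> (size (undup (SS d A)) < #|A|)%N.
Proof.
move=> dU /set0Pn [a aA].
have a0 : [set a] != set0 by apply/set0Pn; exists a; rewrite in_set1.
have := grow dU a0 (erefl #|A :\: [set a]|) ; rewrite sub1set => /(_ aA).
by rewrite single cards1 /=; lia.
Qed.

Lemma size_eq (R : eqType) (s t : seq R) : s =i t -> size (undup s) = size (undup t).
Proof.
move=> E; apply/eqP; rewrite eqn_leq; apply/andP; split; apply: uniq_leq_size;
 rewrite ?undup_uniq // => v; rewrite !mem_undup E //.
Qed.

Theorem corollary9 (R : realFieldType) (T : finType) (d : T -> T -> R) (A : {set T}) :
  in_U d -> A != set0 -> in_U (restr d A).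
Proof.
move=> [dU HS] A0.
have [[[d0 dE dC] dT] dUm] := dU.
have SpT : size (Sp d) = size (undup (SS d setT)).
  apply: size_eq => v; apply/idP/idP.
    move/mapP=> [[a b]]; rewrite mem_enum /= => ab ->.
    by apply/memSS; exists a, b; rewrite !inE.
  move/memSS=> [a [b [_ _ ab ->]]]; apply/mapP; exists (a, b) => //.
  by rewrite mem_enum.
have SpA : size (Sp (restr d A)) = size (undup (SS d A)).
  apply: size_eq => v; apply/idP/idP.
    move/mapP=> [[a b]]; rewrite mem_enum /= => ab ->.
    apply/memSS; exists (val a), (val b); split => //; try exact: valP.
  move/memSS=> [a [b [Ha Hb ab ->]]]; apply/mapP.
  exists (exist _ a Ha, exist _ b Hb) => //.
  by rewrite mem_enum /=; apply: contra ab => /eqP [->].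
split.
  split; [split; [split|] |].
  - by move=> x y; apply: d0.
  - move=> x y; rewrite /restr dE; split; [exact: val_inj | by move->].
  - by move=> x y; apply: dC.
  - by move=> x y z; apply: dT.
  - by move=> x y z; apply: dUm.
rewrite SpA card_sig.
have g := grow dU A0 (erefl _) (subsetT A).
have u := upper dU A0.
rewrite SpT in HS.
rewrite cardsT in g.
have -> : #|[pred x in A]| = #|A| by [].
lia.
Qed.
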